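(* Let $a_n$, $s$ and $c$ be any integers and let $n$ be a positive integer. Then \[ \sum_{a_{n-1}=c}^{a_n}\sum_{a_{n-2}=c}^{a_{n-1}}\cdots\sum_{a_0=c}^{a_1}F_{3a_0+s}=\frac{F_{2n+3a_n+s}}{2^n}-\sum_{j=0}^{n-1}\frac{F_{2(n-j)+3(c-1)+s}}{2^{n-j}}\binom{a_n+j-c}{j}, \] and \[ \sum_{a_{n-1}=c}^{a_n}\sum_{a_{n-2}=c}^{a_{n-1}}\cdots\sum_{a_0=c}^{a_1}L_{3a_0+s}=\frac{L_{2n+3a_n+s}}{2^n}-\sum_{j=0}^{n-1}\frac{L_{2(n-j)+3(c-1)+s}}{2^{n-j}}\binom{a_n+j-c}{j}. \]
   Context: $F_j$ and $L_j$ are the Fibonacci and Lucas numbers: $F_0=0,F_1=1$, $L_0=2,L_1=1$, both satisfying $X_j=X_{j-1}+X_{j-2}$, extended to all integer indices via the recurrence. For integers $c,m$ and a function $f$ on the integers, $\sum_{k=c}^m f(k)$ denotes the usual sum if $m\ge c$, equals $0$ if $m=c-1$, and equals $-\sum_{k=m+1}^{c-1}f(k)$ if $m\le c-2$. The nested sum $\sum_{a_{n-1}=c}^{a_n}\cdots\sum_{a_0=c}^{a_1}g(a_0)$ is the iterated sum with $n$ summation signs: innermost over $a_0$ from $c$ to $a_1$, then $a_1$ from $c$ to $a_2$, ..., outermost $a_{n-1}$ from $c$ to $a_n$. For an integer $j\ge0$ and any number $y$, $\binom{y}{j}=y(y-1)\cdots(y-j+1)/j!$. *)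

(* Defs.v *)
From mathcomp Require Import all_boot all_order all_algebra.
Set Implicit Arguments. Unset Strict Implicit. Unset Printing Implicit Defensive.
Import Order.TTheory GRing.Theory Num.Theory.
Local Open Scope ring_scope.

(* Sequence X on all integers with X_0 = x0, X_1 = x1 and X_j = X_{j-1} + X_{j-2},
   extended to negative indices via the recurrence X_{j-2} = X_j - X_{j-1}. *)
Definition recseq (x0 x1 : int) (k : int) : int :=
  match k with
  | Posz n => (iter n (fun p : int * int => (p.2, p.1 + p.2)) (x0, x1)).1
  | Negz m => (iter m.+1 (fun p : int * int => (p.2 - p.1, p.1)) (x0, x1)).1
  end.

Definition fibZ (k : int) : int := recseq 0 1 k.
Definition lucZ (k : int) : int := recseq 2 1 k.

Definition gsum (c m : int) (f : int -> rat) : rat :=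
  if c <= m then \sum_(i < `|(m - c + 1)%R|%N) f (c + i%:Z)
  else - \sum_(i < `|(c - 1 - m)%R|%N) f (m + 1 + i%:Z).

Fixpoint nested (n : nat) (c : int) (g : int -> rat) (a : int) : rat :=
  match n with
  | O => g a
  | S n' => gsum c a (fun b => nested n' c g b)
  end.

Definition binomQ (y : rat) (j : nat) : rat :=
  (\prod_(i < j) (y - i%:R)) / (j`!)%:R.

(* Main.v *)
Require Import Defs.
From mathcomp Require Import all_boot all_order all_algebra zify ring.
Import Order.TTheory GRing.Theory Num.Theory.
Local Open Scope ring_scope.

Section Rec.
Variables x0 x1 : int.
Let f := (fun p : int * int => (p.2, p.1 + p.2)).
Let g := (fun p : int * int => (p.2 - p.1, p.1)).

Lemma Q1 m : recseq x0 x1 (- m%:Z) = (iter m g (x0, x1)).1.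
Proof. by case: m => [|m] //; rewrite -NegzE. Qed.

Lemma Q2 m : recseq x0 x1 (- m%:Z + 1) = (iter m g (x0, x1)).2.
Proof.
case: m => [|m] //=.
have -> : - (m.+1)%:Z + 1 = - m%:Z by lia.
by rewrite Q1.
Qed.

Lemma recseq_rec k : recseq x0 x1 (k + 2) = recseq x0 x1 (k + 1) + recseq x0 x1 k.
Proof.
case: k => [n|m].
  have -> : Posz n + 2 = Posz n.+2 by lia.
  have -> : Posz n + 1 = Posz n.+1 by lia.
  by rewrite /recseq /= addrC.
have -> : Negz m + 2 = - m%:Z + 1 by rewrite NegzE; lia.
have -> : Negz m + 1 = - m%:Z by rewrite NegzE; lia.
rewrite Q1 Q2 /=.
rewrite /recseq /=. ring.
Qed.
End Rec.
Lemma sumtel (F f : int -> rat) (hF : forall b, F b - F (b - 1) = f b) a N :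
  \sum_(i < N) f (a + i%:Z + 1) = F (a + N%:Z) - F a.
Proof.
elim: N => [|N IH]; first by rewrite big_ord0 addr0 subrr.
rewrite big_ord_recr /= IH -hF.
have -> : a + N%:Z + 1 - 1 = a + N%:Z by ring.
have -> : a + N%:Z + 1 = a + N.+1%:Z by lia.
ring.
Qed.

Lemma gsum_tel (F f : int -> rat) (hF : forall b, F b - F (b - 1) = f b) c m :
  gsum c m f = F m - F (c - 1).
Proof.
rewrite /gsum; case: ifP => hcm.
  have := @sumtel F f hF (c - 1) (absz (m - c + 1)%R).
  have -> : c - 1 + (absz (m - c + 1)%R)%:Z = m by lia.
  move=> <-; apply: eq_bigr => i _; congr f; ring.
have := @sumtel F f hF m (absz (c - 1 - m)%R).
have -> : m + (absz (c - 1 - m)%R)%:Z = c - 1 by lia.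
move=> h; rewrite -[F m - _]opprB -h; congr (- _); apply: eq_bigr => i _; congr f; ring.
Qed.

Lemma binom0 y : binomQ y 0 = 1.
Proof. by rewrite /binomQ big_ord0 fact0 divr1. Qed.

Lemma binom_pascal y j : binomQ y j.+1 - binomQ (y - 1) j.+1 = binomQ (y - 1) j.
Proof.
rewrite /binomQ big_ord_recl big_ord_recr /=.
set P := \prod_(i < j) (y - 1 - i%:R).
have -> : \prod_(i < j) (y - (bump 0 i)%:R) = P.
  by apply: eq_bigr => i _; rewrite /bump /= add1n -addn1 natrD; ring.
rewrite factS natrM.
have h1 : (j.+1)%:R != 0 :> rat by rewrite pnatr_eq0.
have h2 : (j`!)%:R != 0 :> rat by rewrite pnatr_eq0 -lt0n fact_gt0.
rewrite -natr1. field. by rewrite natr1 h1 h2. 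
Qed.

Lemma binom_zero (i : nat) : binomQ (i%:Z)%:~R i.+1 = 0.
Proof.
rewrite /binomQ big_ord_recr /=.
have -> : (i%:Z)%:~R = i%:R :> rat by [].
by rewrite subrr mulr0 mul0r.
Qed.
Lemma binom_pascalZ (z : int) j :
  binomQ z%:~R j.+1 - binomQ (z - 1)%:~R j.+1 = binomQ (z - 1)%:~R j.
Proof. by rewrite intrB binom_pascal. Qed.

Definition RHS (X : int -> rat) (s c : int) (n : nat) (b : int) : rat :=
  X (2 * n%:Z + 3 * b + s) / 2 ^+ n
  - \sum_(j < n) X (2 * (n - j)%N%:Z + 3 * (c - 1) + s) / 2 ^+ (n - j)
                   * binomQ (b + j%:Z - c)%:~R j.

Section Main.
Variable X : int -> rat.
Hypothesis hX : forall k, X (k + 2) = X (k + 1) + X k.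

Lemma hX2 k : X (k + 2) - X (k - 1) = 2 * X k.
Proof.
have := hX (k - 1).
have -> : k - 1 + 2 = k + 1 by ring.
have -> : k - 1 + 1 = k by ring.
move=> h; rewrite hX h; ring.
Qed.

Lemma RHS_zero s c n : RHS X s c n.+1 (c - 1) = 0.
Proof.
rewrite /RHS big_ord_recl /= binom0 subn0 mulr1 big1 ?addr0 ?subrr //.
move=> i _; rewrite /bump /= add1n.
have -> : c - 1 + (i.+1)%:Z - c = i%:Z by lia.
by rewrite binom_zero mulr0.
Qed.

Lemma RHS_diff s c n b : RHS X s c n.+1 b - RHS X s c n.+1 (b - 1) = RHS X s c n b.
Proof.
rewrite /RHS.
set S1 := \sum_(j < n.+1) _.
set S2 := \sum_(j < n.+1) _.
have hs : S1 - S2 = \sum_(j < n) X (2 * (n - j)%N%:Z + 3 * (c - 1) + s) / 2 ^+ (n - j)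
                   * binomQ (b + j%:Z - c)%:~R j.
  rewrite /S1 /S2 -sumrB big_ord_recl /= !binom0 subrr add0r.
  apply: eq_bigr => i _; rewrite -mulrBr /bump /= add1n subSS.
  have -> : b - 1 + (i.+1)%:Z - c = (b + (i.+1)%:Z - c) - 1 by ring.
  rewrite binom_pascalZ.
  by have -> : b + (i.+1)%:Z - c - 1 = b + i%:Z - c by lia.
set k := 2 * n%:Z + 3 * b + s.
have e1 : 2 * (n.+1)%:Z + 3 * b + s = k + 2 by rewrite /k; lia.
have e2 : 2 * (n.+1)%:Z + 3 * (b - 1) + s = k - 1 by rewrite /k; lia.
rewrite e1 e2.
have -> : X (k + 2) / 2 ^+ n.+1 - S1 - (X (k - 1) / 2 ^+ n.+1 - S2)
   = (X (k + 2) - X (k - 1)) / 2 ^+ n.+1 - (S1 - S2) by ring.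
rewrite hs hX2 exprS.
congr (_ - _).
have h2 : (2 : rat) ^+ n != 0 by rewrite expf_neq0.
field. by rewrite h2.
Qed.

Lemma main s c n b : nested n c (fun a0 => X (3 * a0 + s)) b = RHS X s c n b.
Proof.
elim: n b => [|n IH] b.
  by rewrite /RHS /= big_ord0 mulr0 add0r expr0 divr1 subr0.
rewrite /= (@gsum_tel (RHS X s c n.+1)) ?RHS_zero ?subr0 // => b'.
by rewrite RHS_diff IH.
Qed.
End Main.

Theorem theorem1 (an s c : int) (n : nat) (hn : (0 < n)%N) :
  nested n c (fun a0 => (fibZ (3 * a0 + s))%:~R) an =
    (fibZ (2 * n%:Z + 3 * an + s))%:~R / 2 ^+ n
    - \sum_(j < n) (fibZ (2 * (n - j)%N%:Z + 3 * (c - 1) + s))%:~R / 2 ^+ (n - j)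
                   * binomQ (an + j%:Z - c)%:~R j
  /\
  nested n c (fun a0 => (lucZ (3 * a0 + s))%:~R) an =
    (lucZ (2 * n%:Z + 3 * an + s))%:~R / 2 ^+ n
    - \sum_(j < n) (lucZ (2 * (n - j)%N%:Z + 3 * (c - 1) + s))%:~R / 2 ^+ (n - j)
                   * binomQ (an + j%:Z - c)%:~R j.
Proof.
split.
  apply: (@main (fun k => (fibZ k)%:~R)) => k.
  by rewrite /fibZ recseq_rec intrD.
apply: (@main (fun k => (lucZ k)%:~R)) => k.
by rewrite /lucZ recseq_rec intrD.
Qed.
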